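(* For every positive integer $m$, $$G_{-m}(\lambda)=(1+\zeta)^{m+1}\sum_{k=1}^m\left\{\!\left\{{m+k\atop k}\right\}\!\right\}\zeta^k,\qquad\text{where }\zeta=\frac{\lambda}{1-\lambda},$$ as an identity of formal power series (equivalently, of rational functions) in $\lambda$.
   Context: For an integer $m$ let $R_m(z)=\sum_{n\ge1} n^{n-m}\frac{z^n}{n!}$. Let $T(z)=\sum_{n\ge1}n^{n-1}\frac{z^n}{n!}$, which satisfies $T(z)=z e^{T(z)}$, so its compositional inverse is $z=\lambda e^{-\lambda}$. Define $G_m(\lambda):=R_m(\lambda e^{-\lambda})$, so $G_m(T(z))=R_m(z)$; then $\zeta=\lambda/(1-\lambda)$ equals $G_0(\lambda)$. The second-order Stirling numbers (associated Stirling numbers of the second kind) $\{\{{n\atop k}\}\}$ are the numbers of partitions of an $n$-element set into $k$ blocks each of size at least $2$; equivalently $\{\{{0\atop 0}\}\}=1$, $\{\{{n\atop k}\}\}=0$ when $n<0$ or $k\le 0$ with $(n,k)\neq(0,0)$, and $\{\{{n\atop k}\}\}=k\{\{{n-1\atop k}\}\}+(n-1)\{\{{n-2\atop k-1}\}\}$ for $n\ge1$. *)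

(* Defs.v *)
From mathcomp Require Import all_boot all_order all_algebra.
Set Implicit Arguments. Unset Strict Implicit. Unset Printing Implicit Defensive.
Import Order.TTheory GRing.Theory Num.Theory.
Local Open Scope ring_scope.

Definition fps := nat -> rat.

Definition fone : fps := fun n => (n == 0%N)%:R.
Definition fX : fps := fun n => (n == 1%N)%:R.
Definition fadd (f g : fps) : fps := fun n => f n + g n.
Definition fmul (f g : fps) : fps :=
  fun n => \sum_(i < n.+1) f i * g (n - i)%N.
Fixpoint fpow (f : fps) (k : nat) : fps :=
  if k is k'.+1 then fmul f (fpow f k') else fone.

(* composition g(f), for f with zero constant term:
   [x^n] g(f) = sum_{k<=n} g_k [x^n] f^k  (terms k>n vanish since f 0 = 0) *)
Definition fcomp (g f : fps) : fps :=
  fun n => \sum_(k < n.+1) g k * fpow f k n.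

Definition fexpneg : fps := fun n => (-1) ^+ n / (n`!)%:R.
Definition flamexp : fps := fmul fX fexpneg.

Definition Rser (m : int) : fps :=
  fun n => if n is 0%N then 0 else (n%:R : rat) ^ (n%:Z - m) / (n`!)%:R.

Definition Gser (m : int) : fps := fcomp (Rser m) flamexp.

(* zeta = lambda/(1-lambda) = lambda * sum_j lambda^j *)
Definition fgeom : fps := fun _ => 1.
Definition zeta : fps := fmul fX fgeom.

(* second-order (associated) Stirling numbers of the second kind, via
   S(0,0)=1, S(n,k)=0 if k<=0 and (n,k)<>(0,0),
   S(n,k) = k S(n-1,k) + (n-1) S(n-2,k-1) for n>=1 (S(-1,_)=0). *)
Fixpoint stirling2nd (n k : nat) {struct n} : nat :=
  match n with
  | 0%N => (k == 0%N)
  | n1.+1 =>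
      match n1 with
      | 0%N => 0%N
      | n2.+1 =>
          match k with
          | 0%N => 0%N
          | k1.+1 => (k * stirling2nd n1 k + n1 * stirling2nd n2 k1)%N
          end
      end
  end.

(* Main.v *)
Require Import Defs.
From mathcomp Require Import all_boot all_order all_algebra.
From mathcomp Require Import zify ring.
Import GRing.Theory Num.Theory.
Lemma big_trunc_nat (F : nat -> nat) r M : (r <= M)%N ->
  (forall i, (r <= i)%N -> (i < M)%N -> F i = 0%N) ->
  (\sum_(i < M) F i = \sum_(i < r) F i)%N.
Proof.
move=> rM HF; rewrite -!(big_mkord xpredT) (@big_cat_nat _ _ _ r) //=.
rewrite -[RHS]addn0; congr (_ + _)%N.
rewrite big_nat_cond big1 // => i /andP[/andP[H1 H2] _].
exact: HF.
Qed.


Lemma S2_rec n k : stirling2nd n.+2 k.+1 =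
  (k.+1 * stirling2nd n.+1 k.+1 + n.+1 * stirling2nd n k)%N.
Proof. by []. Qed.

Lemma S2_small n k : (n < 2 * k)%N -> stirling2nd n k = 0%N.
Proof.
elim: n {-2}n (leqnn n) k => [|M IH] n.
  by rewrite leqn0 => /eqP -> [|k].
case: n => [_ [|k] //|]; case=> [//|n2] Hn [|k1] // Hk.
rewrite S2_rec !IH //; lia.
Qed.

Lemma S2_0 n : stirling2nd n.+1 0 = 0%N.
Proof. by case: n. Qed.


Fixpoint St (p N : nat) {struct p} : nat :=
  match p, N with
  | 0%N, 0%N => 1%N
  | 0%N, _.+1 => 0%N
  | _.+1, 0%N => 0%N
  | p'.+1, N'.+1 => (N'.+1 * St p' N'.+1 + St p' N')%N
  end.

Lemma St_small p N : (p < N)%N -> St p N = 0%N.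
Proof.
elim: p N => [|p IH] [|N] //= H.
rewrite !IH //; lia.
Qed.

Lemma St_diag N : St N N = 1%N.
Proof. elim: N => //= N ->; rewrite St_small //; lia. Qed.

Definition T (m N : nat) : nat :=
  (\sum_(k < N.+1) 'C(N + m, m + k) * stirling2nd (m + k) k)%N.

Lemma T_bound m N B : (N < B)%N ->
  T m N = (\sum_(k < B) 'C(N + m, m + k) * stirling2nd (m + k) k)%N.
Proof.
move=> NB; rewrite /T (@big_trunc_nat (fun k => 'C(N + m, m + k) * stirling2nd (m + k) k)%N N.+1 B) // => i H1 H2.
rewrite bin_small ?mul0n //. lia.
Qed.

Lemma T0 N : T 0 N = 1%N.
Proof.
rewrite /T big_ord_recl big1 ?addn0; first by rewrite bin0.
move=> i _; rewrite S2_small ?muln0 // add0n lift0; lia.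
Qed.

Lemma T_rec m N : T m.+1 N.+1 = (T m.+1 N + N.+1 * T m N.+1)%N.
Proof.
pose n := (N + m.+1)%N.
pose u k := ('C(n, m + k) * stirling2nd (m + k) k)%N.
rewrite (@T_bound m.+1 N.+1 N.+3); last lia.
rewrite (@T_bound m.+1 N N.+3); last lia.
rewrite (@T_bound m N.+1 N.+3); last lia.
have E1 : forall k : 'I_N.+3, ('C(N.+1 + m.+1, m.+1 + k) * stirling2nd (m.+1 + k) k =
   'C(N + m.+1, m.+1 + k) * stirling2nd (m.+1 + k) k +
   'C(N + m.+1, m + k) * stirling2nd (m.+1 + k) k)%N.
  move=> k; rewrite -mulnDl; congr (_ * _)%N.
rewrite (eq_bigr _ (fun k _ => E1 k)) big_split; congr (_ + _)%N.
have -> : (N.+1 + m = n)%N by rewrite /n; lia.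
rewrite [LHS]big_ord_recl.
have -> : ('C(N + m.+1, m + (@ord0 N.+2)) * stirling2nd (m.+1 + (@ord0 N.+2)) (@ord0 N.+2) = 0)%N.
  by rewrite /=; case: (m) => [|?]; rewrite ?muln0.
rewrite Monoid.mul1m.
have E2 : forall j : 'I_N.+2,
  ('C(N + m.+1, m + lift ord0 j) * stirling2nd (m.+1 + lift ord0 j) (lift ord0 j) =
   j.+1 * u j.+1 + (n - (m + j)) * u j)%N.
  move=> j; rewrite lift0 /u -/n.
  have -> : (m.+1 + j.+1 = (m + j).+2)%N by lia.
  rewrite S2_rec mulnDr !addnS; congr (_ + _)%N; first by rewrite mulnCA.
  by rewrite mulnA [X in (X * _)%N]mulnC mul_bin_left mulnA.
rewrite (eq_bigr _ (fun j _ => E2 j)) big_split /=.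
have -> : (\sum_(j < N.+2) j.+1 * u j.+1 = \sum_(k < N.+3) k * u k)%N.
  by rewrite [RHS]big_ord_recl mul0n add0n; apply: eq_bigr => j _; rewrite lift0.
have -> : (\sum_(j < N.+2) (n - (m + j)) * u j = \sum_(k < N.+3) (n - (m + k)) * u k)%N.
  rewrite [RHS]big_ord_recr /= /u bin_small ?muln0 ?mul0n ?addn0 //.
  rewrite /n; lia.
rewrite -big_split big_distrr /=; apply: eq_bigr => k _.
rewrite -mulnDl /u.
case: (leqP (m + k) n) => H.
  by congr (_ * _)%N; rewrite /n; lia.
by rewrite bin_small ?mul0n ?muln0.
Qed.

Lemma T_St m N : T m N = St (N + m) N.
Proof.
elim: m N => [|m IHm] N; first by rewrite T0 addn0 St_diag.
elim: N => [|N IHN].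
  by rewrite /T big_ord1 -[nat_of_ord _]/0%N addn0 S2_0 muln0.
rewrite T_rec IHN IHm.
have -> : (N.+1 + m.+1 = (N + m.+1).+1)%N by lia.
have -> : (N.+1 + m = N + m.+1)%N by lia.
rewrite [in RHS]/= addnC; congr (_ + _)%N; lia.
Qed.

Local Open Scope ring_scope.

Definition sig (p N : nat) : rat :=
  \sum_(0 <= n < N.+1) (-1) ^+ n * ('C(N, n))%:R * (n%:R) ^+ p.

Lemma sig_split p N : sig p N.+1 = sig p N +
  \sum_(0 <= j < N.+1) (-1) ^+ j.+1 * ('C(N, j))%:R * (j.+1%:R) ^+ p.
Proof.
rewrite /sig big_nat_recl // [in RHS]big_nat_recl //.
under eq_bigr => j _ do rewrite binS natrD mulrDr mulrDl.
rewrite big_split /= !bin0 addrA; congr (_ + _).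
rewrite big_nat_recr //= bin_small // mulr0 mul0r addr0. reflexivity.
Qed.

Lemma sig_S p N : sig p.+1 N.+1 = N.+1%:R *
  \sum_(0 <= j < N.+1) (-1) ^+ j.+1 * ('C(N, j))%:R * (j.+1%:R) ^+ p.
Proof.
rewrite /sig big_nat_recl // expr0n /= mulr0 add0r mulr_sumr.
apply: eq_bigr => j _.
have H := mul_bin_diag N.+1 j; rewrite /= in H.
have H' : (N.+1%:R * ('C(N, j))%:R = j.+1%:R * ('C(N.+1, j.+1))%:R :> rat).
  by rewrite -!natrM H.
rewrite [_ ^+ p.+1]exprS.
transitivity ((-1)^+j.+1 * (j.+1%:R * ('C(N.+1,j.+1))%:R) * j.+1%:R^+p : rat); first ring.
rewrite -H'; ring.
Qed.

Lemma sig_rec p N : sig p.+1 N.+1 = N.+1%:R * (sig p N.+1 - sig p N).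
Proof. rewrite sig_S sig_split; congr (_ * _); ring. Qed.

Lemma sig_St p N : sig p N = (-1) ^+ N * (N`!)%:R * (St p N)%:R.
Proof.
elim: p N => [|p IH] [|N].
- by rewrite /sig big_nat1 /= !mul1r expr0.
- rewrite /= mulr0.
  have := exprDn (1 : rat) (-1) N.+1.
  rewrite subrr expr0n /= => /esym H; rewrite -[RHS]H /sig big_mkord.
  apply: eq_bigr => i _; rewrite expr1n mul1r expr0 mulr1 mulr_natr //.
- by rewrite /sig big_nat1 /= expr0n /= !mulr0.
- rewrite sig_rec !IH /= factS natrM natrD natrM exprS; ring.
Qed.

Lemma big_trunc_rat (F : nat -> rat) r M : (r <= M)%N ->
  (forall i, (r <= i)%N -> (i < M)%N -> F i = 0) ->
  \sum_(i < M) F i = \sum_(i < r) F i.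
Proof.
move=> rM HF; rewrite -!(big_mkord xpredT) (@big_cat_nat _ _ _ r) //=.
rewrite -[RHS]addr0; congr (_ + _).
rewrite big_nat_cond big1 // => i /andP[/andP[H1 H2] _].
exact: HF.
Qed.

Lemma fmulE f g n : fmul f g n = \sum_(0 <= i < n.+1) f i * g (n - i)%N.
Proof. by rewrite /fmul big_mkord. Qed.

Lemma fXmul f n : fmul fX f n = if n is n'.+1 then f n' else 0.
Proof.
rewrite fmulE big_nat_recl // /fX /= mul0r add0r.
case: n => [|n]; first by rewrite big_geq.
rewrite big_nat_recl //= mul1r subn1 big1 ?addr0 // => i _.
by rewrite mul0r.
Qed.

Lemma zetaE n : zeta n = if n is n'.+1 then 1 else 0.
Proof. by rewrite /zeta fXmul; case: n. Qed.

Lemma flamE n : flamexp n = if n is n'.+1 then fexpneg n' else 0.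
Proof. by rewrite /flamexp fXmul. Qed.

Definition cpow (n N : nat) : rat :=
  if (n <= N)%N then (- (n%:R)) ^+ (N - n) / ((N - n)`!)%:R else 0.

Lemma binom_exp (a : rat) r :
  \sum_(i < r.+1) ((-1) ^+ i / (i`!)%:R) * ((- a) ^+ (r - i) / ((r - i)`!)%:R)
  = (- (a + 1)) ^+ r / (r`!)%:R.
Proof.
have -> : - (a + 1) = - a + (-1) by ring.
rewrite exprDn mulr_suml. apply: eq_bigr => i _. have ir := ltn_ord i.
rewrite ltnS in ir.
have H := bin_fact ir.
have HR : ('C(r, i))%:R * ((i`!)%:R * ((r - i)`!)%:R) = (r`!)%:R :> rat.
  by rewrite -!natrM H.
rewrite -HR mulr_natr -mulr_natl.
have h1 : (i`!)%:R != 0 :> rat by rewrite pnatr_eq0 -lt0n fact_gt0.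
have h2 : ((r - i)`!)%:R != 0 :> rat by rewrite pnatr_eq0 -lt0n fact_gt0.
have h3 : ('C(r, i))%:R != 0 :> rat by rewrite pnatr_eq0 -lt0n bin_gt0.
field.
by rewrite h3 h1 h2.
Qed.

Lemma fpow_flam n N : fpow flamexp n N = cpow n N.
Proof.
elim: n N => [|n IH] N.
  rewrite /= /fone /cpow /= subn0 oppr0 expr0n.
  by case: N => [|N] //=; rewrite ?mul0r // fact0 divr1.
rewrite /= fmulE big_nat_recl // flamE mul0r add0r.
case: N => [|N]; first by rewrite big_geq.
under eq_bigr => i _ do rewrite flamE subSS IH.
rewrite /cpow ltnS subSS.
case: (leqP n N) => nN; last first.
  rewrite big1 // => i _; rewrite /cpow.
  have -> : (n <= N - i)%N = false by apply/negbTE; rewrite -ltnNge; lia.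
  by rewrite mulr0.
rewrite big_mkord (@big_trunc_rat (fun i => fexpneg i * cpow n (N - i)) (N - n).+1); last first.
- move=> i H1 H2; rewrite /cpow.
  have -> : (n <= N - i)%N = false by apply/negbTE; rewrite -ltnNge; lia.
  by rewrite mulr0.
- lia.
have E : (1 *- n.+1 : rat) = - (n%:R + 1) by rewrite natr1.
rewrite E -binom_exp; apply: eq_bigr => i _; have Hi := ltn_ord i.
rewrite /cpow /fexpneg.
have -> : (n <= N - i)%N = true by lia.
by have -> : (N - i - n = N - n - i)%N by lia.
Qed.



Lemma sign2 n : (-1) ^+ n * (-1) ^+ n = 1 :> rat.
Proof. by rewrite -exprMn mulrNN mulr1 expr1n. Qed.

Lemma fact_neq0 n : (n`!)%:R != 0 :> rat.
Proof. by rewrite pnatr_eq0 -lt0n fact_gt0. Qed.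

Lemma Gser_term m N n : (0 < m)%N -> (n <= N)%N ->
  Rser (- (m%:Z)) n * fpow flamexp n N =
  (-1) ^+ N / (N`!)%:R * ((-1) ^+ n * ('C(N, n))%:R * (n%:R) ^+ (N + m)).
Proof.
move=> m0 nN; rewrite fpow_flam /cpow nN.
case: n nN => [|n] nN.
  rewrite /Rser mul0r expr0n.
  have -> : (N + m == 0)%N = false by apply/negbTE; lia.
  by rewrite /= !mulr0.
rewrite /Rser opprK -PoszD -exprnP exprNn.
rewrite [in RHS](_ : (N + m = (n.+1 + m) + (N - n.+1))%N); last by lia.
rewrite [in RHS]exprD.
have -> : (-1) ^+ N = (-1) ^+ (N - n.+1) * (-1) ^+ n.+1 :> rat by rewrite -exprD subnK.
have H := bin_fact nN.
have HR : ('C(N, n.+1))%:R * (((n.+1)`!)%:R * ((N - n.+1)`!)%:R) = (N`!)%:R :> rat.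
  by rewrite -!natrM H.
set a := (n.+1%:R : rat) ^+ (n.+1 + m).
set b := (n.+1%:R : rat) ^+ (N - n.+1).
set s := (-1 : rat) ^+ n.+1.
set t := (-1 : rat) ^+ (N - n.+1).
transitivity (t * (s * s) / (N`!)%:R * ('C(N, n.+1))%:R * a * b); last by ring.
rewrite sign2 mulr1 -HR.
have h3 : ('C(N, n.+1))%:R != 0 :> rat by rewrite pnatr_eq0 -lt0n bin_gt0.
have h1 := fact_neq0 n.+1.
have h2 := fact_neq0 (N - n.+1).
field.
by rewrite h3 h1 h2.
Qed.

Lemma Gser_coef m N : (0 < m)%N -> Gser (- (m%:Z)) N = (St (N + m) N)%:R.
Proof.
move=> m0; rewrite /Gser /fcomp.
rewrite (eq_bigr _ (fun (i : 'I_N.+1) _ => Gser_term m N i m0 (ltn_ord i))) -mulr_sumr.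
rewrite -(big_mkord xpredT (fun n => (-1) ^+ n * ('C(N, n))%:R * (n%:R) ^+ (N + m))).
rewrite -/(sig (N + m) N) sig_St.
have h := fact_neq0 N.
transitivity ((-1) ^+ N * (-1) ^+ N * ((N`!)%:R / (N`!)%:R) * (St (N + m) N)%:R :> rat); first by ring.
by rewrite sign2 divff // !mul1r.
Qed.



Lemma fmul_poly N f g (p q : {poly rat}) :
  (forall i, (i <= N)%N -> f i = p`_i) -> (forall i, (i <= N)%N -> g i = q`_i) ->
  forall n, (n <= N)%N -> fmul f g n = (p * q)`_n.
Proof.
move=> Hf Hg n nN; rewrite coefM /fmul; apply: eq_bigr => i _.
have := ltn_ord i; rewrite ltnS => iN.
rewrite Hf ?Hg //; lia.
Qed.

Arguments fmul_poly [N f g p q].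
Lemma fpow_poly N f (p : {poly rat}) :
  (forall i, (i <= N)%N -> f i = p`_i) ->
  forall k n, (n <= N)%N -> fpow f k n = (p ^+ k)`_n.
Proof.
move=> Hf; elim=> [|k IH] n nN; first by rewrite /= /fone coef1.
rewrite exprS /=; exact: (fmul_poly Hf IH n nN).
Qed.

Arguments fpow_poly [N f p].
Lemma F1E r : fadd fone zeta r = 1.
Proof. by rewrite /fadd /fone zetaE; case: r => [|r] /=; rewrite ?addr0 ?add0r. Qed.

Lemma hockey j r : (\sum_(0 <= s < r.+1) 'C(s + j, s) = 'C(r + j.+1, r))%N.
Proof.
elim: r => [|r IH]; first by rewrite big_nat1 !bin0.
rewrite big_nat_recr //= IH.
have -> : (r.+1 + j.+1 = (r.+1 + j).+1)%N by lia.
rewrite binS addnC; congr (_ + _)%N; congr 'C(_, _); lia.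
Qed.

Lemma fpowW j r : fpow (fadd fone zeta) j.+1 r = ('C(r + j, r))%:R.
Proof.
elim: j r => [|j IH] r.
  rewrite /= fmulE big_nat_recr //= F1E subnn /fone /= mulr1 addn0 binn.
  rewrite big1_seq ?add0r // => i; rewrite mem_index_iota => /andP[_ H].
  have -> : (r - i == 0)%N = false by apply/negbTE; lia.
  by rewrite mulr0.
rewrite (_ : fpow _ j.+2 r = fmul (fadd fone zeta) (fpow (fadd fone zeta) j.+1) r) // fmulE.
under eq_bigr => i _ do rewrite F1E mul1r IH.
rewrite -natr_sum big_nat_rev /= -hockey; congr (_%:R).
apply: eq_big_nat => i /andP[_ Hi]; congr 'C(_, _); lia.
Qed.

Definition wp (N : nat) : {poly rat} := \sum_(i < N.+1) 'X^i.

Lemma wpE N i : (wp N)`_i = (i <= N)%:R.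
Proof.
have -> : wp N = \poly_(i < N.+1) (1 : rat).
  by rewrite poly_def /wp; apply: eq_bigr => l _; rewrite scale1r.
by rewrite coef_poly ltnS; case: (i <= N)%N.
Qed.

Lemma wpX N : wp N * ('X - 1) = 'X ^+ N.+1 - 1.
Proof.
elim: N => [|N IH]; first by rewrite /wp big_ord1 expr0 mul1r expr1.
rewrite /wp big_ord_recr /= mulrDl -/(wp N) IH !exprS; ring.
Qed.

Lemma key_coef N j k :
  (wp N ^+ j * (wp N - 1) ^+ k)`_N =
  if (N < k)%N then 0 else (wp N ^+ (j + k))`_(N - k).
Proof.
set w := wp N.
have Ez : 'X * w - (w - 1) = 'X ^+ N.+1.
  have H := wpX N; rewrite -/w in H.
  have -> : 'X ^+ N.+1 = w * ('X - 1) + 1 by rewrite H; ring.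
  ring.
have := subrXX ('X * w) (w - 1) k; rewrite Ez => E.
have -> : (w - 1) ^+ k = ('X * w) ^+ k - 'X ^+ N.+1 *
   (\sum_(i < k) ('X * w) ^+ (k.-1 - i) * (w - 1) ^+ i).
  rewrite -E; ring.
set S := \sum_(i < k) _.
have -> : w ^+ j * (('X * w) ^+ k - 'X ^+ N.+1 * S) =
   'X ^+ k * w ^+ (j + k) - 'X ^+ N.+1 * (S * w ^+ j).
  rewrite exprMn exprD; ring.
by rewrite coefB !coefXnM ltnSn subr0.
Qed.



Theorem proposition1 (m : nat) : (0 < m)%N ->
  Gser (- (m%:Z)) =1
  fmul (fpow (fadd fone zeta) m.+1)
       (fun n => \sum_(1 <= k < m.+1)
                   (stirling2nd (m + k) k)%:R * fpow zeta k n).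
Proof.
move=> m0 N; rewrite Gser_coef // -T_St.
set w := wp N.
have Hz : forall i, (i <= N)%N -> zeta i = (w - 1)`_i.
  move=> i iN; rewrite coefB wpE coef1 zetaE iN.
  by case: i {iN} => [|i] /=; rewrite ?subrr ?subr0.
have Hw : forall i, (i <= N)%N -> fadd fone zeta i = w`_i.
  by move=> i iN; rewrite F1E wpE iN.
rewrite (@fmul_poly N _ _ (w ^+ m.+1)
   (\sum_(1 <= k < m.+1) (stirling2nd (m + k) k)%:R *: (w - 1) ^+ k)) //; first last.
- move=> i iN; rewrite coef_sum; apply: eq_bigr => k _.
  by rewrite coefZ (fpow_poly Hz).
- by move=> i iN; rewrite (fpow_poly Hw).
rewrite mulr_sumr coef_sum.
under eq_bigr => k _ do rewrite -scalerAr coefZ key_coef.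
have Ht : forall k, (stirling2nd (m + k) k)%:R *
    (if (N < k)%N then 0 else (w ^+ (m.+1 + k))`_(N - k)) =
    (('C(N + m, m + k) * stirling2nd (m + k) k)%N)%:R :> rat.
  move=> k; case: (ltnP N k) => Hk.
    by rewrite mulr0 bin_small ?mul0n //; lia.
  rewrite -(fpow_poly Hw) ?leq_subr // addSn fpowW natrM mulrC.
  congr (_ * _); congr (_%:R).
  rewrite -bin_sub; last by lia.
  congr 'C(_, _); lia.
under eq_bigr => k _ do rewrite Ht.
rewrite (@T_bound m N (N + m.+1)); last by lia.
rewrite natr_sum.
rewrite (@big_trunc_rat (fun k => (('C(N + m, m + k) * stirling2nd (m + k) k)%N)%:R) m.+1); last first.
- move=> i H1 H2; rewrite S2_small ?muln0 //; lia.
- lia.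
rewrite -(big_mkord xpredT (fun k => (('C(N + m, m + k) * stirling2nd (m + k) k)%N)%:R)).
rewrite big_ltn // addn0.
clear Ht; case: m m0 Hw Hz => [//|m] _ _ _.
by rewrite S2_0 muln0 add0r.
Qed.
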